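(* Let $G$ be a graph, $d$ a positive integer, $X\subset V(G)$, and let $C(X)$ be the $d$-critical set of $X$. Suppose $B$ is an escape-way in $G$ with $V_{\text{out}}(B)\subset C(X)$. Then $|A_{K(B)}(v)|\geq \deg_G(v)-d$ for every vertex $v\notin C(X)$.
   Context: The $d$-critical set $C(X)$ of a set $X\subset V(G)$ is the terminal set of the following bootstrap percolation process: $X_0=X$, and $X_{i+1}$ is the union of $X_i$ with all vertices $v$ having at least $d$ neighbours at distance at most $2$ from $X_i$ in the graph $G\setminus v$ (vertices of $X_i$ have distance $0$). An oriented subgraph of $G$ is a subgraph with an orientation of each edge, viewed as a digraph on $V(G)$; $N^-_D(v)=\{u:uv\in E(D)\}$; $V_{\text{in}}(D)$ and $V_{\text{out}}(D)$ are the sets of vertices with at least one in-neighbour, resp. out-neighbour, in $D$. An escape-way in $G$ is an oriented subgraph $D$ of $G$ in which every vertex has in-degree at most $1$ and such that whenever $x,y\in V_{\text{in}}(D)$ and $xy\in E(G)$, exactly one of $xy$, $yx$ lies in $E(D)$. For a (bi-)oriented subgraph $D$ (possibly containing both orientations of an edge), $A_D(v)=N_G(v)\setminus\big(V_{\text{in}}(D-v)\cup N^-_D(v)\big)$, where $D-v$ is $D$ with $v$ deleted. $K(D)$ is obtained from $D$ by adding, for every directed edge $uv\in E(D)$, all directed edges $vw$ with $w\in N_G(v)\setminus\{u\}$. *)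

(* Defs.v *)
From mathcomp Require Import all_boot.
Set Implicit Arguments. Unset Strict Implicit. Unset Printing Implicit Defensive.

(* A finite simple graph: vertex type T : finType, adjacency e : rel T,
   symmetric and irreflexive.  Oriented subgraphs are relations D : rel T,
   D u v meaning the directed edge uv. *)

Section Graphs.
Variables (T : finType) (e : rel T).

Definition simple_graph : Prop := symmetric e /\ irreflexive e.

Definition nbhd (v : T) : {set T} := [set u | e v u].
Definition deg (v : T) : nat := #|nbhd v|.

(* u is at distance at most 2 from S in the graph G \ v (u <> v) *)
Definition near2_avoid (v : T) (S : {set T}) (u : T) : bool :=
  (u != v) &&
  [|| u \in S,
      [exists x, [&& x != v, x \in S & e u x]]
    | [exists w, [exists x, [&& w != v, x != v, x \in S, e u w & e w x]]]].

Definition crit_step (d : nat) (S : {set T}) : {set T} :=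
  S :|: [set v | d <= #|[set u | e v u && near2_avoid v S u]|].

(* the d-critical set C(X): terminal set of X_0 = X, X_{i+1} = crit_step X_i,
   i.e. the union of all X_i *)
Definition in_critical (d : nat) (X : {set T}) (v : T) : Prop :=
  exists i : nat, v \in iter i (crit_step d) X.

Definition oriented_subgraph (D : rel T) : Prop :=
  (forall u v, D u v -> e u v) /\ (forall u v, D u v -> ~~ D v u).

Definition in_nbrs (D : rel T) (v : T) : {set T} := [set u | D u v].
Definition V_in (D : rel T) : {set T} := [set v | [exists u, D u v]].
Definition V_out (D : rel T) : {set T} := [set u | [exists v, D u v]].

Definition escape_way (B : rel T) : Prop :=
  oriented_subgraph B /\
  (forall v, #|in_nbrs B v| <= 1) /\
  (forall x y, x \in V_in B -> y \in V_in B -> e x y -> B x y (+) B y x).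

Definition del_vertex (D : rel T) (v : T) : rel T :=
  fun x y => [&& x != v, y != v & D x y].

Definition A_set (D : rel T) (v : T) : {set T} :=
  nbhd v :\: (V_in (del_vertex D v) :|: in_nbrs D v).

Definition K (D : rel T) : rel T :=
  fun v w => D v w || [exists u, [&& D u v, e v w & w != u]].

End Graphs.

(* Main.v *)
Require Import Defs.
From mathcomp Require Import all_boot.
From mathcomp Require Import zify.

Lemma iter_stab (T : finType) (f : {set T} -> {set T}) (X : {set T}) :
  (forall S : {set T}, S \subset f S) -> forall i, iter i f X \subset iter #|T| f X.
Proof.
move=> inf.
have chain : forall i k, iter i f X \subset iter (i + k) f X.
  move=> i; elim=> [|k IH]; first by rewrite addn0.
  by rewrite addnS /=; apply: subset_trans IH (inf _).
have fixk : forall k, iter k.+1 f X = iter k f X -> forall j, iter (k + j) f X = iter k f X.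
  move=> k Hk; elim=> [|j IH]; first by rewrite addn0.
  by rewrite addnS /= IH.
have key : forall n, (forall k, k < n -> iter k.+1 f X != iter k f X) -> n <= #|iter n f X|.
  elim=> // n IH H.
  have h1 := IH (fun k lt => H k (ltnW lt)).
  have h2 : iter n f X \proper iter n.+1 f X.
    by rewrite properEneq inf eq_sym H.
  have := proper_card h2; lia.
case: (boolP [exists k : 'I_#|T|.+1, iter k.+1 f X == iter k f X]).
  case/existsP=> k /eqP Hk i.
  have kle : (k <= #|T|)%N by have := ltn_ord k; lia.
  case: (leqP i #|T|) => hi.
    by have := chain i (#|T| - i); rewrite subnKC.
  have kli : (k <= i)%N by lia.
  have := fixk _ Hk (i - k); rewrite subnKC //.
  move=> ->; have := fixk _ Hk (#|T| - k); rewrite subnKC // => ->.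
  exact: subxx.
move=> /existsPn H.
have := key #|T|.+1 (fun k lt => H (Ordinal lt)).
have := max_card (mem (iter #|T|.+1 f X)). move=> a b. have := leq_trans b a. by rewrite ltnn.
Qed.

Theorem proposition2p8 (T : finType) (e : rel T) (d : nat) (X : {set T})
    (B : rel T) :
  simple_graph e -> 0 < d ->
  escape_way e B ->
  (forall u, u \in V_out B -> in_critical e d X u) ->
  forall v, ~ in_critical e d X v ->
    deg e v - d <= #|A_set e (K e B) v|.
Proof.
move=> [esym eirr] _ [[Be _] _] Hout v Hv.
set C := iter #|T| (crit_step e d) X.
have infl : forall S : {set T}, S \subset crit_step e d S by move=> S; apply: subsetUl.
have inC : forall u, in_critical e d X u -> u \in C.
  by move=> u [i Hi]; apply: (subsetP (@iter_stab T (crit_step e d) X infl i)).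
have BC : forall x y, B x y -> x \in C.
  by move=> x y Bxy; apply: inC; apply: Hout; rewrite inE; apply/existsP; exists y.
set Near := [set u | e v u && near2_avoid e v C u].
have vn : ~~ (d <= #|Near|).
  apply/negP => H; apply: Hv; exists #|T|.+1 => /=.
  by rewrite /crit_step inE; apply/orP; right; rewrite inE.
have vC : v \notin C by apply/negP => H; apply: Hv; exists #|T|.
have sub : nbhd e v :\: Near \subset A_set e (K e B) v.
  apply/subsetP => u; rewrite !inE => /andP [Hnear evu].
  rewrite evu andbT.
  have uv : u != v by apply/eqP => E; subst u; by rewrite eirr in evu.
  rewrite evu /= /near2_avoid uv /= in Hnear.
  have nx : forall x, x != v -> x \in C -> e u x -> False.
    move=> x xv xC eux; move: Hnear; rewrite negb_or => /andP [_ ].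
    rewrite negb_or => /andP [/existsPn /(_ x) ] /=; by rewrite xv xC eux.
  have nwx : forall w x, w != v -> x != v -> x \in C -> e u w -> e w x -> False.
    move=> w x wv xv xC euw ewx; move: Hnear; rewrite !negb_or => /andP [_] /andP [_].
    move=> /existsPn /(_ w) /existsPn /(_ x); by rewrite wv xv xC euw ewx.
  have neqC : forall x, x \in C -> x != v by move=> x xC; apply/eqP => E; subst x; rewrite xC in vC.
  rewrite negb_or; apply/andP; split.
    apply/existsP => [[z]]; rewrite /del_vertex /K => /and3P [zv _ /orP [Bzu|]].
      by apply: (nx z zv (BC _ _ Bzu)); rewrite esym; apply: Be.
    case/existsP => y /and3P [Byz ezu _].
    apply: (nwx z y zv (neqC _ (BC _ _ Byz)) (BC _ _ Byz)); first by rewrite esym.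
    by rewrite esym; apply: Be.
  rewrite /K negb_or; apply/andP; split.
    apply/negP => Buv; have := BC _ _ Buv.
    by move: Hnear; rewrite negb_or => /andP [/negPf -> _].
  apply/existsP => [[y]] /and3P [Byu _ uy].
  apply: (nx y (neqC _ (BC _ _ Byu)) (BC _ _ Byu)); rewrite esym; apply: Be Byu.
have NearN : Near \subset nbhd e v by apply/subsetP => u; rewrite !inE => /andP [].
have := subset_leq_card sub.
have := cardsD (nbhd e v) Near.
rewrite (setIidPr NearN) /deg.
have := subset_leq_card NearN.
lia.
Qed.
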